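(* In the setting of the context (battery capacity $c$, nonnegative i.i.d. energy arrivals distributed as $X$, increasing concave reward $r$ with continuous derivative $r'$, and $r'(\underline{x})>r'(\overline{x})$), let $$c^*\triangleq\max\{c\ge 0:\ r'(c)\ge \mathbb{E}[r'(X)\mathbf{1}\{X<c\}]\},$$ which is the largest battery capacity for which the greedy policy is throughput-optimal. Then $$c^*\ge \underline{c}\triangleq\sup\{c\in(\underline{x},\overline{x}):\ r'(c)\ge \rho(c)\,\overline{r'}_{[\underline{x},c]}(\underline{\xi})\},\qquad \underline{\xi}\triangleq\max\left\{\frac{\mu-(1-\rho(c))\overline{x}}{\rho(c)},\,\underline{x}\right\}.$$ In particular, for $r(x)=\frac12\log(1+x)$, $$\underline{c}=\sup\{c\in(\underline{x},\overline{x}):\ c\le \overline{\zeta}(c)\},\qquad \overline{\zeta}(c)\triangleq\frac{(1-\rho(c))(1+\underline{x})+\rho(c)\underline{\xi}}{\rho(c)}.$$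
   Context: Setting: $X_1,X_2,\dots$ are i.i.d. copies of a nonnegative random variable $X$; a policy chooses $G_t=f_t(X_1,\dots,X_t)$; battery $B_t=\min\{B_{t-1}-G_{t-1}+X_t,c\}$ with $B_0=G_0=0$; admissibility means $G_t\le B_t$; throughput is $\liminf_n\frac1n\mathbb{E}[\sum_{t\le n}r(G_t)]$; the greedy policy is $G_t=B_t$. The reward $r:[0,\infty)\to[0,\infty)$ is monotonically increasing and concave with continuous derivative $r'$. Notation: $\rho(x)\triangleq\mathbb{P}(X<x)$, $\underline{x}\triangleq\max\{x\ge0:\rho(x)=0\}$, $\overline{x}\triangleq\inf\{x\ge0:\rho(x)=1\}$ (possibly $+\infty$; then $(1-\rho(c))\overline{x}=+\infty$ for $c<\overline{x}$ so $\underline{\xi}=\underline{x}$), $r'(\infty)\triangleq\lim_{x\to\infty}r'(x)$, $\mu\triangleq\mathbb{E}[X]$. For $c>\underline{x}$, $\overline{r'}_{[\underline{x},c]}$ denotes the upper concave envelope (smallest concave majorant) of $r'$ restricted to $[\underline{x},c]$. Logarithms are natural. *)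

(* Defs.v *)
From HB Require Import structures.
From mathcomp Require Import all_boot all_order all_algebra.
From mathcomp Require Import all_classical all_reals all_analysis.
Set Implicit Arguments. Unset Strict Implicit. Unset Printing Implicit Defensive.
Import Order.TTheory GRing.Theory Num.Theory.
Import numFieldNormedType.Exports.
Local Open Scope classical_set_scope.
Local Open Scope ring_scope.

Section Defs.
Context {d : measure_display} {T : measurableType d} {R : realType}
  (P : probability T R) (X : {RV P >-> R}).

Definition rho (x : R) : R := fine (P [set t | X t < x]).

Definition xlo : R := sup [set x : R | 0 <= x /\ rho x = 0].

Definition xhi : \bar R := ereal_inf [set x%:E | x in [set x : R | 0 <= x /\ rho x = 1]].

Definition mu : \bar R := 'E_P[X].

(* underline xi (c) = max {(mu - (1 - rho c) xhi)/rho c, xlo};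
   when xhi = +oo the first term is -oo, so xi = xlo *)
Definition xi (c : R) : R :=
  match xhi with
  | EFin xb => Num.max ((fine mu - (1 - rho c) * xb) / rho c) xlo
  | _ => xlo
  end.

(* the hypothesis r'(underline x) > r'(overline x), with r'(oo) = lim_{x->oo} r'(x) *)
Definition deriv_gap (rp : R -> R) : Prop :=
  match xhi with
  | EFin xb => rp xb < rp xlo
  | _ => lim (rp x @[x --> +oo]) < rp xlo
  end.

Definition cstar (rp : R -> R) : \bar R :=
  ereal_sup [set c%:E | c in [set c : R | 0 <= c /\
     (\int[P]_t (rp (X t) * (X t < c)%R%:R)%:E <= (rp c)%:E)%E]].

End Defs.

Arguments rho {d T R} P X x.
Arguments xlo {d T R} P X.
Arguments xhi {d T R} P X.
Arguments mu {d T R} P X.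
Arguments xi {d T R} P X c.
Arguments deriv_gap {d T R} P X rp.
Arguments cstar {d T R} P X rp.

Definition concave_on {R : realType} (a b : R) (g : R -> R) : Prop :=
  forall x y t, a <= x <= b -> a <= y <= b -> 0 <= t <= 1 ->
    t * g x + (1 - t) * g y <= g (t * x + (1 - t) * y).

Definition concave_env {R : realType} (f : R -> R) (a b x : R) : R :=
  inf [set g x | g in [set g : R -> R | concave_on a b g /\
                                        forall y, a <= y <= b -> f y <= g y]].

Section Defs2.
Context {d : measure_display} {T : measurableType d} {R : realType}
  (P : probability T R) (X : {RV P >-> R}).

Definition clow (rp : R -> R) : \bar R :=
  ereal_sup [set c%:E | c in [set c : R | xlo P X < c /\ (c%:E < xhi P X)%E /\
     rho P X c * concave_env rp (xlo P X) c (xi P X c) <= rp c]].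

Definition zetabar (c : R) : R :=
  ((1 - rho P X c) * (1 + xlo P X) + rho P X c * xi P X c) / rho P X c.

End Defs2.

Arguments clow {d T R} P X rp.
Arguments zetabar {d T R} P X c.

(* Main.v *)
Require Import Defs.
From HB Require Import structures.
From mathcomp Require Import all_boot all_order all_algebra.
From mathcomp Require Import all_classical all_reals all_analysis.
From mathcomp Require Import ring lra.
Import Order.TTheory GRing.Theory Num.Theory.
Import numFieldNormedType.Exports.
Local Open Scope classical_set_scope.
Local Open Scope ring_scope.

Section RealLemmas.
Context {R : realType}.

Lemma divle (a b p q : R) : 0 < p -> 0 < q -> a * q <= b * p -> a / p <= b / q.
Proof.
move=> p0 q0 H; rewrite ler_pdivrMr // mulrAC ler_pdivlMr //.
Qed.

Lemma chord3 (F : R -> R) (u v w : R) : u < v -> v < w ->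
  ((w - v) / (w - u)) * F u + (1 - (w - v) / (w - u)) * F w <= F v ->
  (F w - F u) / (w - u) <= (F v - F u) / (v - u) /\
  (F w - F v) / (w - v) <= (F w - F u) / (w - u).
Proof.
move=> uv vw H.
have p0 : 0 < v - u by rewrite subr_gt0.
have q0 : 0 < w - v by rewrite subr_gt0.
have pq0 : 0 < w - u by rewrite subr_gt0 (lt_trans uv vw).
have H' : (w - v) * F u + (v - u) * F w <= (w - u) * F v.
  have e : 1 - (w - v) / (w - u) = (v - u) / (w - u).
    by field; rewrite gt_eqF.
  move: H; rewrite e.
  have -> : (w - v) / (w - u) * F u + (v - u) / (w - u) * F w =
     ((w - v) * F u + (v - u) * F w) / (w - u) by field; rewrite gt_eqF.
  by rewrite ler_pdivrMr // [F v * _]mulrC.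
split; apply: divle => //; nra.
Qed.

Lemma chord3_pt (u v w : R) : u < w ->
  ((w - v) / (w - u)) * u + (1 - (w - v) / (w - u)) * w = v.
Proof. by move=> uw; field; rewrite subr_eq0 gt_eqF. Qed.

Lemma chord3_t (u v w : R) : u <= v -> v <= w -> u < w ->
  0 <= (w - v) / (w - u) <= 1.
Proof.
move=> uv vw uw; have pq0 : 0 < w - u by rewrite subr_gt0.
apply/andP; split; first by apply: divr_ge0; lra.
rewrite ler_pdivrMr // mul1r; lra.
Qed.

End RealLemmas.

Section B.
Context {R : realType}.
Lemma deriv_ge (f : R -> R) (x l m : R) :
  is_derive x 1 f l ->
  (exists2 e : R, 0 < e & forall h, h != 0 -> `|h| < e -> m <= h^-1 * (f (h + x) - f x)) ->
  m <= l.
Proof.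
move=> [Hd <-] [e e0 He].
apply: limr_ge => //.
near=> h.
rewrite /= -[h%:A]/(h * 1) mulr1 -[_ *: _]/(_ * _).
apply: He.
- near: h. exact: nbhs_dnbhs_neq.
- near: h. exact: dnbhs0_lt.
Unshelve. all: by end_near.
Qed.

Lemma deriv_le (f : R -> R) (x l m : R) :
  is_derive x 1 f l ->
  (exists2 e : R, 0 < e & forall h, h != 0 -> `|h| < e -> h^-1 * (f (h + x) - f x) <= m) ->
  l <= m.
Proof.
move=> [Hd <-] [e e0 He].
apply: limr_le => //.
near=> h.
rewrite /= -[h%:A]/(h * 1) mulr1 -[_ *: _]/(_ * _).
apply: He.
- near: h. exact: nbhs_dnbhs_neq.
- near: h. exact: dnbhs0_lt.
Unshelve. all: by end_near.
Qed.

Lemma cont0_ge (g : R -> R) (m : R) : {within `[0, +oo[, continuous g} ->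
  (exists2 d : R, 0 < d & forall x, 0 < x -> x < d -> m <= g x) -> m <= g 0.
Proof.
move=> /continuous_within_itvcyP [_ Hc] [d d0 Hd].
rewrite -(cvg_lim _ Hc) //.
apply: limr_ge; first by apply/cvg_ex; exists (g 0).
near=> x.
apply: Hd.
- near: x; exact: nbhs_right_gt.
- near: x; exact: nbhs_right_lt.
Unshelve. all: by end_near.
Qed.
End B.
Arguments deriv_ge {R f x l m}.
Arguments deriv_le {R f x l m}.
Arguments chord3 {R} F {u v w}.
Arguments chord3_pt {R} u v w.
Arguments chord3_t {R} u v w.

Section C.
Context {R : realType} (r rp : R -> R).
Hypothesis Hmono : forall x y : R, 0 <= x -> x <= y -> r x <= r y.
Hypothesis Hconc : forall x y t : R, 0 <= x -> 0 <= y -> 0 <= t <= 1 ->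
         t * r x + (1 - t) * r y <= r (t * x + (1 - t) * y).
Hypothesis Hd : forall x : R, 0 < x -> is_derive x 1 r (rp x).
Hypothesis Hc : {within `[0, +oo[, continuous rp}.

Let sl (a b : R) := (r b - r a) / (b - a).

Let sl_sym a b : sl a b = sl b a.
Proof. by rewrite /sl -opprB -[b - a]opprB invrN mulrNN. Qed.

Let quotE x h : h^-1 * (r (h + x) - r x) = sl x (h + x).
Proof. by rewrite /sl addrK mulrC. Qed.

Let slope3 u v w : 0 <= u -> u < v -> v < w ->
  sl u w <= sl u v /\ sl v w <= sl u w.
Proof.
move=> u0 uv vw.
have uw : u < w by apply: lt_trans uv vw.
apply: (chord3 r) => //.
rewrite -{3}(chord3_pt u v w uw).
apply: Hconc; [done| lra |].
apply: chord3_t; lra.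
Qed.

Lemma rp_ge0 x : 0 <= x -> 0 <= rp x.
Proof.
have pos y : 0 < y -> 0 <= rp y.
  move=> y0; apply: (deriv_ge (Hd y y0)); exists y => // h h0 hy.
  rewrite quotE.
  case: (ltP 0 h) => hs.
    rewrite /sl divr_ge0 // ?subr_ge0; last lra.
    apply: Hmono; lra.
  have hn : h < 0 by rewrite lt_neqAle h0 hs.
  have : `|h| = - h by rewrite ltr0_norm.
  move=> e; rewrite e in hy.
  rewrite sl_sym /sl divr_ge0 // ?subr_ge0; last lra.
  apply: Hmono; lra.
move=> x0; case: (ltP 0 x) => [/pos //|x0'].
have -> : x = 0 by apply/eqP; rewrite eq_le x0' x0.
apply: cont0_ge => //; exists 1 => // z z0 _; exact: pos.
Qed.

Lemma rp_noninc x y : 0 <= x -> x <= y -> rp y <= rp x.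
Proof.
have main a b : 0 < a -> a < b -> rp b <= rp a.
  move=> a0 ab.
  have h1 : sl a b <= rp a.
    apply: (deriv_ge (Hd a a0)); exists (Num.min a (b - a)).
      by rewrite lt_min a0 subr_gt0 ab.
    move=> h h0; rewrite lt_min => /andP [ha hb]; rewrite quotE.
    case: (ltP 0 h) => hs.
      rewrite gtr0_norm // in ha hb.
      by case: (slope3 a (h+a) b); first (by lra); try lra.
    have hn : h < 0 by rewrite lt_neqAle h0 hs.
    rewrite ltr0_norm // in ha hb.
    rewrite [sl a (h + a)]sl_sym.
    by case: (slope3 (h+a) a b); try lra.
  have h2 : rp b <= sl a b.
    apply: (deriv_le (Hd b (lt_trans a0 ab))); exists (b - a).
      by rewrite subr_gt0.
    move=> h h0 hb; rewrite quotE.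
    case: (ltP 0 h) => hs.
      rewrite gtr0_norm // in hb.
      by case: (slope3 a b (h+b)); try lra.
    have hn : h < 0 by rewrite lt_neqAle h0 hs.
    rewrite ltr0_norm // in hb.
    rewrite [sl b (h + b)]sl_sym.
    by case: (slope3 a (h+b) b); try lra.
  exact: le_trans h2 h1.
move=> x0 xy.
case: (ltP x y) => xy'; last first.
  by have -> : x = y by apply/eqP; rewrite eq_le xy xy'.
case: (ltP 0 x) => x0'; first exact: main.
have -> : x = 0 by apply/eqP; rewrite eq_le x0' x0.
apply: cont0_ge => //; exists y; first lra.
move=> z z0 zy; exact: main.
Qed.
End C.

Section D.
Context {R : realType}.

Lemma supergrad (rp g : R -> R) (a c xi : R) :
  (forall x y, a <= x -> x <= y -> y <= c -> rp y <= rp x) ->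
  concave_on a c g -> (forall y, a <= y <= c -> rp y <= g y) ->
  a <= xi -> xi < c ->
  exists2 b : R, b <= 0 & forall x, a <= x <= c -> rp x <= g xi + b * (x - xi).
Proof.
move=> Hrp Hg Hmaj axi xic.
have ac : a < c by apply: le_lt_trans axi xic.
pose h x := Num.min (g a) (g x).
have hconc : forall x y t, a <= x <= c -> a <= y <= c -> 0 <= t <= 1 ->
    t * h x + (1 - t) * h y <= h (t * x + (1 - t) * y).
  move=> x y t hx hy ht.
  have := Hg x y t hx hy ht.
  have h1 : h x <= g a by rewrite /h ge_min lexx.
  have h2 : h x <= g x by rewrite /h ge_min lexx orbT.
  have h3 : h y <= g a by rewrite /h ge_min lexx.
  have h4 : h y <= g y by rewrite /h ge_min lexx orbT.
  move=> Hxy; case/andP: ht => t0 t1.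
  have p1 : 0 <= t * (g a - h x) by apply: mulr_ge0; lra.
  have p2 : 0 <= (1 - t) * (g a - h y) by apply: mulr_ge0; lra.
  have p3 : 0 <= t * (g x - h x) by apply: mulr_ge0; lra.
  have p4 : 0 <= (1 - t) * (g y - h y) by apply: mulr_ge0; lra.
  rewrite [h (_ + _)]/h le_min; apply/andP; split; lra.
have hnon : forall x y, a <= x -> x <= y -> y <= c -> h y <= h x.
  move=> x y ax xy yc.
  have hya : h y <= g a by rewrite /h ge_min lexx.
  case: (leP (g a) (g x)) => gax.
    by rewrite {2}/h (min_l gax).
  rewrite {2}/h (min_r (ltW gax)).
  suff : g y <= g x.
    by move=> gyx; apply: le_trans gyx; rewrite /h ge_min lexx orbT.
  case: (ltP x y) => xy'; last by have -> : x = y by apply/eqP; rewrite eq_le xy xy'.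
  have ax' : a < x.
    rewrite lt_neqAle ax andbT; apply/negP => /eqP e; rewrite e in gax.
    by rewrite ltxx in gax.
  have ay : a < y by apply: lt_trans ax' xy'.
  have := Hg a y ((y - x) / (y - a)).
  rewrite chord3_pt //.
  move=> /(_ _ _ (chord3_t a x y ax (ltW xy') ay)).
  have ht := chord3_t a x y ax (ltW xy') ay.
  set t := (y - x) / (y - a).
  have t0 : 0 < t by rewrite /t divr_gt0 // subr_gt0.
  have ht1 : t <= 1 by case/andP: ht.
  move=> H; rewrite leNgt; apply/negP => gyx.
  have : a <= a <= c by rewrite lexx /=; lra.
  have : a <= y <= c by apply/andP; split; lra.
  move=> Hy Ha; have := H Ha Hy.
  have p1 : 0 < t * (g a - g x) by apply: mulr_gt0; lra.
  have p2 : 0 <= (1 - t) * (g y - g x) by apply: mulr_ge0; lra.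
  lra.
have hmaj : forall x, a <= x <= c -> rp x <= h x.
  move=> x /andP [ax xc]; rewrite /h le_min; apply/andP; split.
  - apply: le_trans (Hmaj a _); first exact: Hrp.
    by rewrite lexx /=; lra.
  - by apply: Hmaj; rewrite ax xc.
pose S := [set (h y - h xi) / (y - xi) | y in [set y | xi < y <= c]].
have S0 : S !=set0.
  by exists ((h c - h xi) / (c - xi)); exists c => //=; rewrite xic lexx.
have Sub : ubound S 0.
  move=> z [y /andP [xiy yc] <-].
  rewrite ler_pdivrMr ?subr_gt0 // mul0r subr_le0.
  by apply: hnon => //; apply: ltW.
have hasS : has_sup S by split => //; exists 0.
exists (sup S); first exact: ge_sup.
move=> x /andP [ax xc].
apply: (le_trans (hmaj x _)); first by rewrite ax xc.
have hxi : h xi <= g xi by rewrite /h ge_min lexx orbT.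
suff : h x <= h xi + sup S * (x - xi) by lra.
case: (ltgtP x xi) => [xxi|xix|->]; last by rewrite subrr mulr0 addr0.
- have : sup S <= (h xi - h x) / (xi - x).
    apply: ge_sup => // z [y /andP [xiy yc] <-].
    have xy : x < y by apply: lt_trans xxi xiy.
    have := hconc x y ((y - xi) / (y - x)).
    rewrite chord3_pt //.
    have Hx : a <= x <= c by rewrite ax xc.
    have Hy : a <= y <= c by apply/andP; split; lra.
    move=> /(_ Hx Hy (chord3_t x xi y (ltW xxi) (ltW xiy) xy)) H.
    case: (chord3 h xxi xiy H) => H1 H2.
    exact: le_trans H2 H1.
  rewrite ler_pdivlMr ?subr_gt0 // => H; lra.
- have : (h x - h xi) / (x - xi) <= sup S.
    apply: ub_le_sup; first by exists 0.
    by exists x => //=; rewrite xix xc.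
  rewrite ler_pdivrMr ?subr_gt0 // => H; lra.
Qed.

Lemma env_ge (f : R -> R) (a c x J : R) :
  (exists g, concave_on a c g /\ forall y, a <= y <= c -> f y <= g y) ->
  (forall g, concave_on a c g -> (forall y, a <= y <= c -> f y <= g y) -> J <= g x) ->
  J <= concave_env f a c x.
Proof.
move=> [g0 [H0 H0']] HJ; rewrite /concave_env; apply: lb_le_inf.
  by exists (g0 x), g0.
by move=> z [g [Hg Hm] <-]; apply: HJ.
Qed.

Lemma env_eq (f L : R -> R) (a c x : R) :
  concave_on a c L -> (forall y, a <= y <= c -> f y <= L y) ->
  (forall g, concave_on a c g -> (forall y, a <= y <= c -> f y <= g y) -> L x <= g x) ->
  concave_env f a c x = L x.
Proof.
move=> HL HLm Hg; apply/eqP; rewrite eq_le; apply/andP; split.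
  rewrite /concave_env; apply: ge_inf; last by exists L.
  by exists (L x) => z [g [Hg1 Hg2] <-]; apply: Hg.
by apply: env_ge => //; exists L.
Qed.
End D.

Section E.
Context {d : measure_display} {T : measurableType d} {R : realType}
  (P : probability T R) (X : {RV P >-> R}).
Hypothesis hX0 : forall t, 0 <= X t.

Lemma mE (c : R) : measurable [set t | X t < c].
Proof.
have := measurable_funP X measurableT _ (measurable_itv `]-oo, c[).
rewrite setTI; congr measurable; apply/seteqP; split => t /=; rewrite in_itv //=.
Qed.

Lemma mGe (c : R) : measurable [set t | c <= X t].
Proof.
have := measurable_funP X measurableT _ (measurable_itv `[c, +oo[).
rewrite setTI; congr measurable; apply/seteqP; split => t /=; rewrite in_itv /= ?andbT //.
Qed.

Lemma mGt (c : R) : measurable [set t | c < X t].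
Proof.
have := measurable_funP X measurableT _ (measurable_itv `]c, +oo[).
rewrite setTI; congr measurable; apply/seteqP; split => t /=; rewrite in_itv /= ?andbT //.
Qed.

Lemma PE (c : R) : P [set t | X t < c] = (rho P X c)%:E.
Proof.
rewrite /rho fineK //; rewrite ge0_fin_numE ?measure_ge0 //.
by apply: (le_lt_trans (probability_le1 P (mE c))); rewrite ltry.
Qed.

Lemma rho_ge0 c : 0 <= rho P X c.
Proof. by rewrite -lee_fin -PE; exact: measure_ge0. Qed.

Lemma rho_le1 c : rho P X c <= 1.
Proof. by rewrite -lee_fin -PE; exact: probability_le1 (mE c). Qed.

Lemma rho_mono x y : x <= y -> rho P X x <= rho P X y.
Proof.
move=> xy; rewrite -lee_fin -!PE; apply: le_measure; rewrite ?inE; try exact: mE.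
by move=> t /= H; apply: lt_le_trans H xy.
Qed.

Lemma PGe (c : R) : P [set t | c <= X t] = (1 - rho P X c)%:E.
Proof.
have -> : [set t | c <= X t] = ~` [set t | X t < c].
  by apply/seteqP; split => t /=; rewrite leNgt => /negP.
by rewrite probability_setC ?PE //; exact: mE.
Qed.

Local Open Scope ereal_scope.

Lemma intD (f g : T -> R) : measurable_fun setT f -> measurable_fun setT g ->
  (forall t, (0 <= f t)%R) -> (forall t, (0 <= g t)%R) ->
  \int[P]_t ((f t + g t)%R)%:E = \int[P]_t (f t)%:E + \int[P]_t (g t)%:E.
Proof.
move=> mf mg f0 g0.
under eq_integral do rewrite EFinD.
apply: ge0_integralD => //.
- by move=> t _; rewrite lee_fin.
- exact/measurable_realfun.measurable_EFinP.
- by move=> t _; rewrite lee_fin.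
- exact/measurable_realfun.measurable_EFinP.
Qed.

Lemma intZ (k : R) (f : T -> R) : (0 <= k)%R -> measurable_fun setT f ->
  (forall t, (0 <= f t)%R) ->
  \int[P]_t (k * f t)%:E = k%:E * \int[P]_t (f t)%:E.
Proof.
move=> k0 mf f0.
under eq_integral do rewrite EFinM.
apply: ge0_integralZl_EFin => //.
- by move=> t _; rewrite lee_fin.
- exact/measurable_realfun.measurable_EFinP.
Qed.

Lemma indE (c : R) : (fun t => ((X t < c)%R)%:R) = \1_[set t | (X t < c)%R] :> (T -> R).
Proof. by apply/funext => t; rewrite indicE mem_setE. Qed.

Lemma indGeE (c : R) : (fun t => ((c <= X t)%R)%:R) = \1_[set t | (c <= X t)%R] :> (T -> R).
Proof. by apply/funext => t; rewrite indicE mem_setE. Qed.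

Lemma m_ind (c : R) : measurable_fun setT (fun t => ((X t < c)%R)%:R : R).
Proof. by rewrite indE; apply: measurable_realfun.measurable_indic; exact: mE. Qed.

Lemma m_indGe (c : R) : measurable_fun setT (fun t => ((c <= X t)%R)%:R : R).
Proof. by rewrite indGeE; apply: measurable_realfun.measurable_indic; exact: mGe. Qed.

Lemma intInd (c : R) : \int[P]_t (((X t < c)%R)%:R : R)%:E = (rho P X c)%:E.
Proof.
rewrite (eq_integral (fun t => (\1_[set t | (X t < c)%R] t)%:E)); last first.
  by move=> t _; rewrite indicE mem_setE.
rewrite integral_indic //; last exact: mE.
rewrite setIT; exact: PE.
Qed.

Lemma intIndGe (c : R) : \int[P]_t (((c <= X t)%R)%:R : R)%:E = (1 - rho P X c)%:E.
Proof.
rewrite (eq_integral (fun t => (\1_[set t | (c <= X t)%R] t)%:E)); last first.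
  by move=> t _; rewrite indicE mem_setE.
rewrite integral_indic //; last exact: mGe.
rewrite setIT; exact: PGe.
Qed.

Lemma int_le_ae (f g : T -> R) : measurable_fun setT f -> measurable_fun setT g ->
  (forall t, (0 <= f t)%R) -> (forall t, (0 <= g t)%R) ->
  {ae P, forall t, (f t <= g t)%R} ->
  \int[P]_t (f t)%:E <= \int[P]_t (g t)%:E.
Proof.
move=> mf mg f0 g0 H.
apply: ae_ge0_le_integral => //.
- by move=> t _; rewrite lee_fin.
- exact/measurable_realfun.measurable_EFinP.
- by move=> t _; rewrite lee_fin.
- exact/measurable_realfun.measurable_EFinP.
- by apply: filterS H => t H _; rewrite lee_fin.
Qed.

Lemma ae_null (N : set T) (Q : T -> Prop) : measurable N -> P N = 0 ->
  (forall t, ~ N t -> Q t) -> {ae P, forall t, Q t}.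
Proof.
move=> mN PN HQ; exists N; split => //.
by move=> t /= nQ; apply: contrapT => nN; apply: nQ; apply: HQ.
Qed.

End E.

Lemma arch_inv {R : realType} (e : R) : 0 < e -> exists n : nat, (n.+1%:R)^-1 < e.
Proof.
move=> e0; exists (Num.trunc e^-1).
rewrite invf_plt ?posrE ?ltr0Sn //; exact: truncnS_gt.
Qed.

Section F.
Context {d : measure_display} {T : measurableType d} {R : realType}
  (P : probability T R) (X : {RV P >-> R}).
Hypothesis hX0 : forall t, 0 <= X t.

Lemma null_union (A : set T) (F : nat -> set T) : measurable A ->
  (forall n, measurable (F n)) -> (forall n, P (F n) = 0) ->
  A `<=` \bigcup_n F n -> P A = 0.
Proof.
move=> mA mF PF AF; apply/eqP; rewrite eq_le measure_ge0 andbT.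
apply: le_trans (measure_sigma_subadditive P mF mA AF) _.
by rewrite eseries0 // => n _ _; exact: PF.
Qed.

Lemma rho0 : rho P X 0 = 0.
Proof.
rewrite /rho (_ : [set t | X t < 0] = set0) ?measure0 //.
by apply/seteqP; split => t //=; rewrite ltNge hX0.
Qed.

Let Slo := [set x : R | 0 <= x /\ rho P X x = 0].

Lemma Slo_sup : has_sup Slo.
Proof.
split; first by exists 0; split => //; exact: rho0.
have [n Hn] : exists n : nat, 0 < rho P X n%:R.
  apply: contrapT => /forallNP H.
  have : P setT = 0.
    apply: (null_union _ (fun n => [set t | X t < n%:R])) => //.
    - by move=> n; exact: mE.
    - move=> n; rewrite PE; congr (_%:E).
      apply/eqP; rewrite eq_le rho_ge0 // andbT leNgt; apply/negP => /H //.
    - move=> t _; exists (Num.trunc (X t)).+1 => //=; exact: truncnS_gt.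
  by rewrite probability_setT => /eqP; rewrite onee_eq0.
exists n%:R => x [x0 rx]; rewrite leNgt; apply/negP => nx.
have := rho_mono P X _ _ (ltW nx); rewrite rx => H.
by move: Hn; rewrite ltNge H.
Qed.

Lemma xlo_ge0 : 0 <= xlo P X.
Proof.
rewrite /xlo; apply: (ub_le_sup (proj2 Slo_sup)); split => //; exact: rho0.
Qed.

Lemma rho_pos c : xlo P X < c -> 0 < rho P X c.
Proof.
move=> lc; rewrite lt_neqAle rho_ge0 // andbT; apply/negP => /eqP H.
have : c <= xlo P X.
  apply: (ub_le_sup (proj2 Slo_sup)); split => //.
  by apply: le_trans (ltW lc); exact: xlo_ge0.
by rewrite leNgt lc.
Qed.

Lemma P_lt_xlo : P [set t | X t < xlo P X] = 0.
Proof.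
apply: (null_union _ (fun n => [set t | X t < xlo P X - (n.+1%:R)^-1])).
- exact: mE.
- by move=> n; exact: mE.
- move=> n; rewrite PE; congr (_%:E); apply/eqP; rewrite eq_le rho_ge0 // andbT.
  have eps0 : 0 < (n.+1%:R : R)^-1 by rewrite invr_gt0 ltr0Sn.
  have [e [e0 re] He] := sup_adherent eps0 Slo_sup.
  rewrite -re; apply: rho_mono; apply: ltW; exact: He.
- move=> t /= Ht.
  have h0 : 0 < xlo P X - X t by rewrite subr_gt0.
  have [n Hn] := arch_inv _ h0.
  exists n => //=; move: Hn; generalize ((n.+1%:R : R)^-1) => q Hq.
  by rewrite ltrBrDr addrC -ltrBrDr.
Qed.

Let Shi := [set x : R | 0 <= x /\ rho P X x = 1].

Lemma xhi_ge0 : (0 <= xhi P X)%E.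
Proof. by apply/ereal_infP => y [x [x0 _] <-]; rewrite lee_fin. Qed.

Lemma rho_above xb : xhi P X = xb%:E -> forall y, xb < y -> rho P X y = 1.
Proof.
move=> Hx y xy.
have e0 : 0 < y - xb by rewrite subr_gt0.
have := @lb_ereal_inf_adherent _ [set x%:E | x in Shi] _ e0.
rewrite -/(xhi P X) Hx => /(_ isT) [z [x [x0 rx] <-]].
rewrite -EFinD lte_fin => H.
apply/eqP; rewrite eq_le rho_le1 /= -rx; apply: rho_mono.
by apply: ltW; move: H; rewrite addrC subrK.
Qed.

Lemma P_gt_xhi xb : xhi P X = xb%:E -> P [set t | xb < X t] = 0.
Proof.
move=> Hx.
apply: (null_union _ (fun n => [set t | xb + (n.+1%:R)^-1 <= X t])).
- exact: mGt.
- by move=> n; exact: mGe.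
- move=> n; rewrite PGe (rho_above _ Hx) ?subrr //.
  by rewrite ltrDl invr_gt0 ltr0Sn.
- move=> t /= Ht.
  have h0 : 0 < X t - xb by rewrite subr_gt0.
  have [n Hn] := arch_inv _ h0.
  exists n => //=; move: Hn; generalize ((n.+1%:R : R)^-1) => q Hq.
  by rewrite -lerBrDl ltW.
Qed.

End F.

Import measurable_realfun.

Definition IX {d : measure_display} {T : measurableType d} {R : realType}
  (P : probability T R) (X : {RV P >-> R}) (c : R) : \bar R :=
  (\int[P]_t (X t * ((X t < c)%R)%:R)%:E)%E.

Section G.
Context {d : measure_display} {T : measurableType d} {R : realType}
  (P : probability T R) (X : {RV P >-> R}).
Hypothesis hX0 : forall t, 0 <= X t.

Let ind (c : R) (t : T) : R := ((X t < c)%R)%:R.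
Let indGe (c : R) (t : T) : R := ((c <= X t)%R)%:R.

Let ind_ge0 c t : 0 <= ind c t. Proof. by rewrite /ind; case: (X t < c). Qed.
Let indGe_ge0 c t : 0 <= indGe c t. Proof. by rewrite /indGe; case: (c <= X t). Qed.

Let mX : measurable_fun setT X. Proof. exact: measurable_funP. Qed.

Lemma int_le (f g : T -> R) : measurable_fun setT f -> measurable_fun setT g ->
  (forall t, 0 <= f t) -> (forall t, 0 <= g t) -> (forall t, f t <= g t) ->
  (\int[P]_t (f t)%:E <= \int[P]_t (g t)%:E)%E.
Proof.
move=> mf mg f0 g0 fg; apply: int_le_ae => //.
by apply: (ae_null P set0) => //; rewrite measure0.
Qed.

Let mXind c : measurable_fun setT (fun t => X t * ind c t).
Proof. apply: measurable_funM => //; exact: m_ind. Qed.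

Lemma IX_ge0 (c : R) : (0 <= IX P X c)%E.
Proof. apply: integral_ge0 => t _; rewrite lee_fin mulr_ge0 //; exact: ind_ge0. Qed.

Lemma IX_le c : 0 <= c -> (IX P X c <= (c * rho P X c)%:E)%E.
Proof.
move=> c0.
rewrite EFinM -(intInd P X c) -(intZ P c _ c0 (m_ind P X c) (ind_ge0 c)).
apply: int_le.
- exact: mXind.
- by apply: measurable_funM; [exact: measurable_cst | exact: m_ind].
- by move=> t; rewrite mulr_ge0.
- by move=> t; rewrite mulr_ge0 //; exact: ind_ge0.
- move=> t; rewrite /ind; case: ltP => H; rewrite ?mulr1 ?mulr0 //; exact: ltW.
Qed.

Lemma IX_fin c : 0 <= c -> IX P X c = (fine (IX P X c))%:E.
Proof.
move=> c0; rewrite fineK // ge0_fin_numE ?IX_ge0 //.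
by apply: le_lt_trans (IX_le c c0) _; rewrite ltry.
Qed.

Let mcind (k c : R) : measurable_fun setT (fun t => k * ind c t).
Proof. by apply: measurable_funM; [exact: measurable_cst | exact: m_ind]. Qed.

Let mcindGe (k c : R) : measurable_fun setT (fun t => k * indGe c t).
Proof. by apply: measurable_funM; [exact: measurable_cst | exact: m_indGe]. Qed.

Lemma K1 c : 0 <= c -> xlo P X * rho P X c <= fine (IX P X c).
Proof.
move=> c0; rewrite -lee_fin -IX_fin // EFinM -(intInd P X c).
rewrite -(intZ P (xlo P X) _ (xlo_ge0 P X hX0) (m_ind P X c) (ind_ge0 c)).
apply: int_le_ae.
- exact: mcind.
- exact: mXind.
- by move=> t; apply: mulr_ge0; [exact: xlo_ge0 | exact: ind_ge0].
- by move=> t; rewrite mulr_ge0 //; exact: ind_ge0.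
- apply: (ae_null P [set t | X t < xlo P X] (fun t => xlo P X * ind c t <= X t * ind c t) (mE P X _) (P_lt_xlo P X hX0)).
  move=> t /negP; rewrite -leNgt => H.
  by rewrite ler_wpM2r //; exact: ind_ge0.
Qed.

Lemma K2 c xb : 0 <= c -> xhi P X = xb%:E ->
  mu P X = (fine (mu P X))%:E /\ fine (mu P X) <= fine (IX P X c) + xb * (1 - rho P X c).
Proof.
move=> c0 Hx.
have xb0 : 0 <= xb by rewrite -lee_fin -Hx; exact: xhi_ge0.
have mu0 : (0 <= mu P X)%E.
  by rewrite /mu expectation_def; apply: integral_ge0 => t _; rewrite lee_fin.
have H : (mu P X <= (fine (IX P X c) + xb * (1 - rho P X c))%:E)%E.
  rewrite EFinD -IX_fin // EFinM -(intIndGe P X c).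
  rewrite -(intZ P xb _ xb0 (m_indGe P X c) (indGe_ge0 c)).
  rewrite /IX -intD //; last first.
  - by move=> t; rewrite mulr_ge0 //; exact: indGe_ge0.
  - by move=> t; rewrite mulr_ge0 //; exact: ind_ge0.
  - exact: mcindGe.
  - exact: mXind.
  rewrite /mu expectation_def.
  apply: int_le_ae => //.
  - apply: measurable_funD; [exact: mXind | exact: mcindGe].
  - by move=> t; apply: addr_ge0; [apply: mulr_ge0 => //; exact: ind_ge0 | apply: mulr_ge0 => //; exact: indGe_ge0].
  - apply: (ae_null P [set t | xb < X t] (fun t => X t <= X t * ind c t + xb * indGe c t) (mGt P X _) (P_gt_xhi P X _ Hx)).
    move=> t /negP; rewrite -leNgt => H.
    case: (ltP (X t) c) => Hc.
      by rewrite /ind /indGe Hc [c <= X t]leNgt Hc /= mulr1 mulr0 addr0.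
    by rewrite /ind /indGe ltNge Hc /= mulr0 mulr1 add0r.
have fm : mu P X = (fine (mu P X))%:E.
  rewrite fineK // ge0_fin_numE //.
  by apply: le_lt_trans H _; rewrite ltry.
by split => //; rewrite -lee_fin -fm.
Qed.

Lemma K3 c : xlo P X < c -> fine (IX P X c) < c * rho P X c.
Proof.
move=> lc.
have l0 := xlo_ge0 P X hX0.
pose c' := (xlo P X + c) / 2.
have lc' : xlo P X < c' by rewrite /c'; lra.
have c'c : c' < c by rewrite /c'; lra.
have r' := rho_pos P X hX0 _ lc'.
have c0 : 0 <= c by lra.
have H : (IX P X c + ((c - c') * rho P X c')%:E <= (c * rho P X c)%:E)%E.
  rewrite !EFinM -!(intInd P X).
  have cc0 : 0 <= c - c' by lra.
  rewrite -(intZ P (c - c') _ cc0 (m_ind P X c') (ind_ge0 c')).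
  rewrite -(intZ P c _ c0 (m_ind P X c) (ind_ge0 c)).
  rewrite /IX -intD //; last first.
  - by move=> t; rewrite mulr_ge0 //; exact: ind_ge0.
  - by move=> t; rewrite mulr_ge0 //; exact: ind_ge0.
  - exact: mcind.
  - exact: mXind.
  apply: int_le.
  - apply: measurable_funD; [exact: mXind | exact: mcind].
  - exact: mcind.
  - by move=> t; rewrite addr_ge0 // mulr_ge0 //; exact: ind_ge0.
  - by move=> t; rewrite mulr_ge0 //; exact: ind_ge0.
  - move=> t; rewrite /ind.
    case: (ltP (X t) c') => H1.
      have H2 : X t < c by lra.
      rewrite H2 /= !mulr1; lra.
    case: (ltP (X t) c) => H2 /=; rewrite ?mulr1 ?mulr0 ?addr0 //.
    exact: ltW.
move: H; rewrite IX_fin // -EFinD lee_fin => H.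
have : 0 < (c - c') * rho P X c' by rewrite mulr_gt0 // subr_gt0.
lra.
Qed.

End G.

Section H.
Context {d : measure_display} {T : measurableType d} {R : realType}
  (P : probability T R) (X : {RV P >-> R}).
Hypothesis hX0 : forall t, 0 <= X t.

Lemma xi_props c : xlo P X < c -> (c%:E < xhi P X)%E ->
  [/\ xlo P X <= xi P X c, xi P X c < c & rho P X c * xi P X c <= fine (IX P X c)].
Proof.
move=> lc ch.
have l0 := xlo_ge0 P X hX0.
have c0 : 0 <= c by lra.
have r0 := rho_pos P X hX0 _ lc.
have k1 := K1 P X hX0 c c0.
have k3 := K3 P X hX0 c lc.
rewrite /xi; case E: (xhi P X) => [xb| |].
2,3: by split => //; rewrite mulrC.
have [fm Hm] := K2 P X hX0 c xb c0 E.
set A := (fine (mu P X) - (1 - rho P X c) * xb) / rho P X c.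
have eA : rho P X c * A = fine (mu P X) - (1 - rho P X c) * xb.
  by rewrite /A mulrC divfK // gt_eqF.
have rA : rho P X c * A <= fine (IX P X c) by rewrite eA; lra.
have Ac : A < c.
  by rewrite -(ltr_pM2l r0); apply: le_lt_trans rA _; rewrite mulrC.
split.
- by rewrite le_max lexx orbT.
- by rewrite gt_max Ac lc.
- case: (leP A (xlo P X)) => h; [rewrite mulrC; exact: k1 | exact: rA].
Qed.

Lemma part1_core (rp : R -> R) (c : R) :
  (forall x, 0 <= x -> 0 <= rp x) ->
  (forall x y, 0 <= x -> x <= y -> rp y <= rp x) ->
  measurable_fun setT (fun t => rp (X t)) ->
  xlo P X < c -> (c%:E < xhi P X)%E ->
  rho P X c * concave_env rp (xlo P X) c (xi P X c) <= rp c ->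
  (\int[P]_t (rp (X t) * ((X t < c)%R)%:R)%:E <= (rp c)%:E)%E.
Proof.
move=> rp0 rpn mrp lc ch Henv.
have l0 := xlo_ge0 P X hX0.
have c0 : 0 <= c by lra.
have r0 := rho_pos P X hX0 _ lc.
have [axi xic Kx] := xi_props c lc ch.
set a := xlo P X in l0 lc axi Kx Henv *.
set xi := xi P X c in axi xic Kx Henv *.
set rho := rho P X c in r0 Kx Henv *.
have ind0 : forall t, 0 <= ((X t < c)%R)%:R :> R by move=> t; case: (X t < c).
have mind := m_ind P X c.
have mf : measurable_fun setT (fun t => rp (X t) * ((X t < c)%R)%:R).
  exact: measurable_funM.
have f0 : forall t, 0 <= rp (X t) * ((X t < c)%R)%:R.
  by move=> t; apply: mulr_ge0 => //; apply: rp0.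
set Irp := (\int[P]_t (rp (X t) * ((X t < c)%R)%:R)%:E)%E.
have Irp0 : (0 <= Irp)%E by apply: integral_ge0 => t _; rewrite lee_fin.
have Irple : (Irp <= (rp 0 * rho)%:E)%E.
  rewrite EFinM -(intInd P X c) -(intZ P (rp 0) _ (rp0 _ (lexx 0)) mind ind0).
  apply: int_le => //.
  - by apply: measurable_funM => //; exact: measurable_cst.
  - by move=> t; apply: mulr_ge0 => //; apply: rp0; rewrite lexx.
  - move=> t; case: (X t < c); rewrite ?mulr1 ?mulr0 //.
    by apply: rpn.
have Irpf : Irp = (fine Irp)%:E.
  rewrite fineK // ge0_fin_numE //; apply: le_lt_trans Irple _; exact: ltry.
have IXf := IX_fin P X hX0 c c0.
suff H : fine Irp <= rho * concave_env rp a c xi.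
  by rewrite Irpf lee_fin; apply: le_trans H Henv.
have -> : fine Irp = rho * (fine Irp / rho) by rewrite mulrC divfK // gt_eqF.
rewrite ler_pM2l //.
apply: env_ge.
  exists (fun _ => rp a); split.
    move=> x y t _ _ _; lra.
  move=> y /andP [ay yc]; exact: rpn.
move=> g Hg Hm.
rewrite ler_pdivrMr // mulrC.
have [b b0 Hb] := @supergrad R rp g a c xi
  (fun x y ax xy yc => rpn x y (le_trans l0 ax) xy) Hg Hm axi xic.
set K0 := g xi - b * xi.
have gxi : rp xi <= g xi by apply: Hm; rewrite axi (ltW xic).
have K00 : 0 <= K0.
  have := rp0 xi (le_trans l0 axi).
  have : 0 <= - b * xi by apply: mulr_ge0; lra.
  rewrite /K0; lra.
have nb0 : 0 <= - b by lra.
have H : (\int[P]_t ((rp (X t) * ((X t < c)%R)%:R) + (- b) * (X t * ((X t < c)%R)%:R))%:E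
     <= \int[P]_t (K0 * ((X t < c)%R)%:R)%:E)%E.
  apply: int_le_ae.
  - apply: measurable_funD => //; apply: measurable_funM; first exact: measurable_cst.
    exact: measurable_funM.
  - by apply: measurable_funM => //; exact: measurable_cst.
  - by move=> t; apply: addr_ge0 => //; apply: mulr_ge0 => //; apply: mulr_ge0.
  - by move=> t; apply: mulr_ge0.
  - apply: (ae_null P [set t | X t < a]
      (fun t => rp (X t) * ((X t < c)%R)%:R + - b * (X t * ((X t < c)%R)%:R) <= K0 * ((X t < c)%R)%:R)
      (mE P X _) (P_lt_xlo P X hX0)).
    move=> t /negP; rewrite -leNgt => H.
    case: (ltP (X t) c) => Hc; rewrite /= ?mulr1 ?mulr0 ?addr0 //.
    have := Hb (X t); rewrite H (ltW Hc) => /(_ isT).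
    rewrite /K0; lra.
have mXi : measurable_fun setT (fun t => X t * ((X t < c)%R)%:R).
  exact: (measurable_funM (measurable_funP X) mind).
have mg : measurable_fun setT (fun t => - b * (X t * ((X t < c)%R)%:R)).
  exact: (measurable_funM (measurable_cst _) mXi).
have Xi0 : forall t, 0 <= X t * ((X t < c)%R)%:R by move=> t; apply: mulr_ge0.
have g0 : forall t, 0 <= - b * (X t * ((X t < c)%R)%:R) by move=> t; apply: mulr_ge0.
move: H.
rewrite (intD P _ _ mf mg f0 g0) (intZ P (- b) _ nb0 mXi Xi0) (intZ P K0 _ K00 mind ind0).
rewrite (intInd P X c).
rewrite -/(IX P X c) IXf -/Irp Irpf -EFinM -EFinD lee_fin => H.
have : 0 <= - b * (fine (IX P X c) - rho * xi) by apply: mulr_ge0; lra.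
rewrite /K0 -/rho in H. rewrite [fine (fine Irp)%:E]/=. nra.
Qed.

End H.

Section I.
Context {d : measure_display} {T : measurableType d} {R : realType}
  (P : probability T R) (X : {RV P >-> R}).
Hypothesis hX0 : forall t, 0 <= X t.

Lemma m_rpX (rp : R -> R) : {within `[0, +oo[, continuous rp} ->
  measurable_fun setT (fun t => rp (X t)).
Proof.
move=> Hc.
have mrp : measurable_fun (`[0, +oo[%classic : set R) rp.
  exact: subspace_continuous_measurable_fun.
apply: (measurable_comp (F := (`[0, +oo[%classic : set R))) => //.
- by move=> _ [t _ <-] /=; rewrite in_itv /= andbT.
Qed.
End I.

Section J.
Context {R : realType}.

Lemma sign_div (N D : R) : 0 < D -> (N / D <= 0) = (N <= 0).
Proof. by move=> D0; rewrite ler_pdivrMr // mul0r. Qed.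

Lemma logenv (a c xi rho : R) : 0 <= a -> a < c -> a <= xi -> xi <= c -> 0 < rho ->
  (rho * concave_env (fun x : R => (2 * (1 + x))^-1) a c xi <= (2 * (1 + c))^-1) =
  (c <= ((1 - rho) * (1 + a) + rho * xi) / rho).
Proof.
move=> a0 ac axi xic r0.
set f := fun x : R => (2 * (1 + x))^-1.
pose L := fun x : R => (1 + c + a - x) / (2 * (1 + a) * (1 + c)).
have a1 : 0 < 1 + a by lra.
have c1 : 0 < 1 + c by lra.
have D0 : 0 < 2 * (1 + a) * (1 + c) by rewrite !mulr_gt0.
have fa : f a = L a.
  by rewrite /f /L; field; rewrite !gt_eqF //; lra.
have fc : f c = L c.
  by rewrite /f /L; field; rewrite !gt_eqF //; lra.
have -> : concave_env f a c xi = L xi.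
  apply: env_eq.
  - move=> x y t _ _ _; rewrite le_eqVlt; apply/orP; left; apply/eqP.
    by rewrite /L; field; rewrite !gt_eqF.
  - move=> y /andP [ay yc].
    have y1 : 0 < 1 + y by lra.
    rewrite -subr_ge0.
    have -> : L y - f y = ((y - a) * (c - y)) / (2 * (1 + a) * (1 + c) * (1 + y)).
      by rewrite /L /f; field; rewrite !gt_eqF.
    apply: divr_ge0; first by apply: mulr_ge0; lra.
    by rewrite !mulr_ge0 //; lra.
  - move=> g Hg Hm.
    have ht := chord3_t a xi c axi xic ac.
    have := Hg a c ((c - xi) / (c - a)).
    rewrite chord3_pt // => /(_ _ _ ht).
    have Ha : a <= a <= c by rewrite lexx /=; lra.
    have Hc : a <= c <= c by rewrite lexx andbT; lra.
    move=> /(_ Ha Hc) H; apply: le_trans H.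
    have := Hm a Ha; have := Hm c Hc; rewrite fa fc.
    case/andP: ht => t0 t1.
    have -> : L xi = (c - xi) / (c - a) * L a + (1 - (c - xi) / (c - a)) * L c.
      by rewrite /L; field; rewrite !gt_eqF //; lra.
    move=> h1 h2.
    have p1 : 0 <= (c - xi) / (c - a) * (g a - L a) by apply: mulr_ge0; lra.
    have p2 : 0 <= (1 - (c - xi) / (c - a)) * (g c - L c) by apply: mulr_ge0; lra.
    lra.
rewrite -subr_le0 -[X in _ = X]subr_le0.
have -> : rho * L xi - (2 * (1 + c))^-1 =
   (rho * c - (1 - rho) * (1 + a) - rho * xi) / (2 * (1 + a) * (1 + c)).
  by rewrite /L; field; rewrite !gt_eqF.
have -> : c - ((1 - rho) * (1 + a) + rho * xi) / rho =
   (rho * c - (1 - rho) * (1 + a) - rho * xi) / rho.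
  by field; rewrite gt_eqF.
by rewrite !sign_div.
Qed.
End J.

Theorem proposition2 (d : measure_display) (T : measurableType d) (R : realType)
  (P : probability T R) (X : {RV P >-> R}) :
  (forall t, 0 <= X t) ->
  (* general reward r with continuous derivative rp *)
  (forall (r rp : R -> R),
      (forall x : R, 0 <= x -> 0 <= r x) ->
      (forall x y : R, 0 <= x -> x <= y -> r x <= r y) ->
      (forall x y t : R, 0 <= x -> 0 <= y -> 0 <= t <= 1 ->
         t * r x + (1 - t) * r y <= r (t * x + (1 - t) * y)) ->
      {within `[0, +oo[, continuous r} ->
      (forall x : R, 0 < x -> is_derive x 1 r (rp x)) ->
      {within `[0, +oo[, continuous rp} ->
      deriv_gap P X rp ->
      (clow P X rp <= cstar P X rp)%E)
  /\
  (* the log reward r(x) = (1/2) log(1 + x), r'(x) = 1 / (2 (1 + x)) *)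
  (let rp := fun x : R => (2 * (1 + x))^-1 in
   deriv_gap P X rp ->
   clow P X rp =
     ereal_sup [set c%:E | c in [set c : R | xlo P X < c /\ (c%:E < xhi P X)%E /\
                                         c <= zetabar P X c]]).
Proof.
move=> hX0; split.
- move=> r rp _ rmono rconc _ Hd Hc _.
  have rp0 := rp_ge0 r rp rmono Hd Hc.
  have rpn := rp_noninc r rp rconc Hd Hc.
  have mrp := m_rpX P X hX0 rp Hc.
  rewrite /clow /cstar; apply: ub_ereal_sup.
  move=> _ [c [lc [ch Henv]] <-]; apply: ereal_sup_ubound; exists c => //; split.
    by apply: le_trans (ltW lc); exact: xlo_ge0.
  exact: (part1_core P X hX0 rp c rp0 rpn mrp lc ch Henv).
- move=> rp _; rewrite /clow; congr ereal_sup; congr image.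
  apply/funext => c; apply/propext; split => [] [lc [ch H]]; split => //; split => //.
  + have [axi xic _] := xi_props P X hX0 c lc ch.
    have l0 := xlo_ge0 P X hX0.
    have r0 := rho_pos P X hX0 c lc.
    by rewrite /zetabar -logenv //; exact: ltW.
  + have [axi xic _] := xi_props P X hX0 c lc ch.
    have l0 := xlo_ge0 P X hX0.
    have r0 := rho_pos P X hX0 c lc.
    by rewrite /zetabar logenv //; exact: ltW.
Qed.
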